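(* Let $a,b,c,d\in K$ with $c\in\Delta(a)$ and $d\in\Delta(b)$. If $(T-b)^{-1}$ is defined at $a$, then $(T-d)^{-1}$ is defined at $c$.
   Context: Let $K$ be a skew field, $K^*=K\setminus\{0\}$, $\sigma\colon K\to K$ a ring endomorphism and $\delta\colon K\to K$ a $\sigma$-derivation. $K[T;\sigma,\delta]$ is the skew polynomial ring with $Ta=\sigma(a)T+\delta(a)$. The $(\sigma,\delta)$-action of $K^*$ on $K$ is ${}^{b}a=\sigma(b)ab^{-1}+\delta(b)b^{-1}$; $\Delta(a)=\{{}^{b}a:b\in K^*\}$. For $P\in K[T;\sigma,\delta]$ and $a\in K$, $P(a)$ is the unique element of $K$ with $P(T)-P(a)\in K[T;\sigma,\delta](T-a)$. For a set $Z$ with a $K^*$-action, the skew product of functions $Z\to K$ is $(f\diamond g)(z)=f({}^{g(z)}z)g(z)$ if $g(z)\neq0$, $0$ otherwise; $f$ is skew invertible if some $g$ satisfies $f\diamond g=g\diamond f=1$. $K(T;\sigma,\delta)$ is the division ring of left fractions of $K[T;\sigma,\delta]$; each $f$ has a unique minimal representation $P(T)^{-1}Q(T)$ with $P$ monic of least degree; $f$ is defined at $a$ if the function $\Delta(a)\to K$, $c\mapsto P(c)$, is skew invertible. *)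

(* Defs.v *)
From HB Require Import structures.
From mathcomp Require Import all_boot all_order all_algebra.
From Stdlib Require Import ClassicalEpsilon.
Set Implicit Arguments.
Unset Strict Implicit.
Unset Printing Implicit Defensive.
Import GRing.Theory.
Local Open Scope ring_scope.

Section SkewPoly.
Variable (K : unitRingType) (sigma delta : K -> K).

(* A skew polynomial  sum_i p_i T^i  (coefficients on the left) is stored as the
   coefficient list of an element of {poly K}; only its additive structure and
   left scaling are used. *)

(* left multiplication by T:  T * (sum a_i T^i) = sum (sigma(a_i) T^(i+1) + delta(a_i) T^i) *)
Definition mulT (p : {poly K}) : {poly K} := map_poly sigma p * 'X + map_poly delta p.

Definition spmul (p q : {poly K}) : {poly K} :=
  \sum_(i < size p) p`_i *: iter i mulT q.

Definition is_seval (P : {poly K}) (a r : K) : Prop :=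
  exists Q : {poly K}, P = spmul Q ('X - a%:P) + r%:P.
Definition seval (P : {poly K}) (a : K) : K :=
  epsilon (inhabits (0 : K)) (is_seval P a).

Definition sact (b a : K) : K := sigma b * a * b^-1 + delta b * b^-1.

Definition Delta (a : K) : K -> Prop := fun c => exists2 b : K, b != 0 & c = sact b a.

(* skew product of functions Z -> K (functions represented on all of K,
   only their values on Z matter) *)
Definition skew_prod (f g : K -> K) (z : K) : K :=
  if g z != 0 then f (sact (g z) z) * g z else 0.

Definition skew_invertible (Z : K -> Prop) (f : K -> K) : Prop :=
  exists g : K -> K, forall z, Z z -> skew_prod f g z = 1 /\ skew_prod g f z = 1.

(* Equality of left fractions P^{-1} Q = P'^{-1} Q' in the division ring of left
   fractions K(T;sigma,delta) (Ore condition): u P = v P' <> 0 and u Q = v Q'. *)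
Definition lfrac_eq (P Q P' Q' : {poly K}) : Prop :=
  exists u v : {poly K},
    [/\ spmul u P = spmul v P', spmul u P != 0 & spmul u Q = spmul v Q'].

Definition minimal_lrep (P Q P0 Q0 : {poly K}) : Prop :=
  [/\ lfrac_eq P Q P0 Q0, P \is monic &
      forall P' Q', lfrac_eq P' Q' P0 Q0 -> P' \is monic -> (size P <= size P')%N].

Definition defined_at (P0 Q0 : {poly K}) (a : K) : Prop :=
  forall P Q, minimal_lrep P Q P0 Q0 -> skew_invertible (Delta a) (fun c => seval P c).

End SkewPoly.

(* Main.v *)
Require Import Defs.
From HB Require Import structures.
From mathcomp Require Import all_boot all_order all_algebra.
From Stdlib Require Import ClassicalEpsilon.
Import GRing.Theory.
Local Open Scope ring_scope.

Section Work.
Variable (K : unitRingType).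
Hypothesis Kdiv : forall x : K, x != 0 -> x \is a GRing.unit.
Variable sigma : {rmorphism K -> K}.
Variable delta : K -> K.
Hypothesis delta_add : forall x y : K, delta (x + y) = delta x + delta y.
Hypothesis delta_mul : forall x y : K, delta (x * y) = sigma x * delta y + delta x * y.

Local Notation mT := (mulT sigma delta).
Local Notation sm := (spmul sigma delta).

Lemma d0 : delta 0 = 0.
Proof. have := delta_add 0 0; rewrite addr0 => h; apply/(addrI (delta 0)); by rewrite -h addr0. Qed.
Lemma dN x : delta (- x) = - delta x.
Proof. apply/eqP; rewrite -subr_eq0 opprK -delta_add addNr d0 //. Qed.
Lemma dB x y : delta (x - y) = delta x - delta y.
Proof. by rewrite delta_add dN. Qed.
Lemma d1 : delta 1 = 0.
Proof. have := delta_mul 1 1; rewrite !mulr1 rmorph1 mul1r => h.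
  apply/(addrI (delta 1)); by rewrite -h addr0. Qed.

Lemma unit_neq0 (x : K) : x \is a GRing.unit -> x != 0.
Proof. by apply: contraTneq => ->; rewrite unitr0. Qed.
Lemma sig_neq0 x : x != 0 -> sigma x != 0.
Proof. by move=> /Kdiv /(rmorph_unit sigma) /unit_neq0. Qed.

Lemma size_eq_coef (p : {poly K}) n : (size p <= n.+1)%N -> p`_n != 0 -> size p = n.+1.
Proof.
move=> h nz; apply/eqP; rewrite eqn_leq h /= ltnNge; apply/negP => /leq_sizeP h2.
by rewrite h2 ?eqxx in nz.
Qed.

Lemma coef_mT p i : (mT p)`_i = (if i == 0%N then 0 else sigma p`_i.-1) + delta p`_i.
Proof. by rewrite /mulT coefD coefMX (coef_map_id0 _ _ d0) coef_map. Qed.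

Lemma mTD p q : mT (p + q) = mT p + mT q.
Proof. apply/polyP => i; rewrite coefD !coef_mT !coefD rmorphD delta_add.
case: (i == 0%N); rewrite ?addr0 ?add0r; [by [] | by rewrite addrACA]. Qed.
Lemma mT0 : mT 0 = 0.
Proof. apply/polyP => i; rewrite coef_mT !coef0 rmorph0 d0; case: (i == 0%N); rewrite addr0 //. Qed.
Lemma mTN p : mT (- p) = - mT p.
Proof. apply/eqP; rewrite -subr_eq0 opprK -mTD addNr mT0 //. Qed.
Lemma mTB p q : mT (p - q) = mT p - mT q.
Proof. by rewrite mTD mTN. Qed.
Lemma mTZ a (p : {poly K}) : mT (a *: p) = sigma a *: mT p + delta a *: p.
Proof. apply/polyP => i; rewrite coef_mT coefD !(coefZ a p) (coefZ (sigma a)) (coefZ (delta a)) coef_mT delta_mul.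
case: (i == 0%N); rewrite ?mulr0 ?add0r //.
by rewrite rmorphM mulrDr addrA. Qed.

Lemma iterD i p q : iter i mT (p + q) = iter i mT p + iter i mT q.
Proof. by elim: i => //= i ->; rewrite mTD. Qed.
Lemma iter0 i : iter i mT 0 = 0.
Proof. by elim: i => //= i ->; rewrite mT0. Qed.
Lemma iterB i p q : iter i mT (p - q) = iter i mT p - iter i mT q.
Proof. by elim: i => //= i ->; rewrite mTB. Qed.


Lemma spmul_ext n (p r : {poly K}) : (size p <= n)%N ->
  sm p r = \sum_(i < n) p`_i *: iter i mT r.
Proof.
move=> H; rewrite /spmul (big_ord_widen n (fun i => p`_i *: iter i mT r) H) big_mkcond /=.
apply: eq_bigr => i _; case: ltnP => // h; by rewrite nth_default // scale0r.
Qed.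

Lemma spmulDl p q r : sm (p + q) r = sm p r + sm q r.
Proof.
set n := maxn (size p) (size q).
rewrite !(spmul_ext n) ?leq_maxl ?leq_maxr ?(leq_trans (size_polyD _ _)) //.
rewrite -big_split /=; apply: eq_bigr => i _; by rewrite coefD scalerDl.
Qed.

Lemma spmul0l r : sm 0 r = 0.
Proof. by rewrite /spmul size_poly0 big_ord0. Qed.

Lemma spmulNl p r : sm (- p) r = - sm p r.
Proof. apply/eqP; rewrite -subr_eq0 opprK -spmulDl addNr spmul0l //. Qed.

Lemma spmulZl a p r : sm (a *: p) r = a *: sm p r.
Proof.
rewrite !(spmul_ext (size p)) ?size_scale_leq // scaler_sumr.
apply: eq_bigr => i _; by rewrite (coefZ a p) scalerA.
Qed.

Lemma spmulBr p x y : sm p (x - y) = sm p x - sm p y.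
Proof. rewrite /spmul -sumrB; apply: eq_bigr => i _; by rewrite iterB scalerBr. Qed.

Lemma spmulC a r : sm a%:P r = a *: r.
Proof. rewrite (spmul_ext 1) ?size_polyC ?leq_b1 // big_ord1 coefC /=. done. Qed.

Lemma mT_sum n (F : 'I_n -> {poly K}) : mT (\sum_(i < n) F i) = \sum_(i < n) mT (F i).
Proof. exact: (big_morph _ mTD mT0). Qed.

Lemma spmul_mT q r : sm (mT q) r = mT (sm q r).
Proof.
set m := size q.
have hs : (size (mT q) <= m.+1)%N.
  apply/leq_sizeP => j hj; rewrite coef_mT.
  case: j hj => // j hj /=.
  by rewrite !nth_default ?rmorph0 ?d0 ?addr0 // ltnW // ltnW.
rewrite (@spmul_ext _ _ r hs) (@spmul_ext m.+1 q r (leqnSn _)) mT_sum.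
have -> : \sum_(i < m.+1) (mT q)`_i *: iter i mT r =
   \sum_(i < m.+1) (if (i : nat) == 0%N then 0 else sigma q`_i.-1) *: iter i mT r +
   \sum_(i < m.+1) delta q`_i *: iter i mT r.
  by rewrite -big_split /=; apply: eq_bigr => i _; rewrite coef_mT scalerDl.
have -> : \sum_(i < m.+1) mT (q`_i *: iter i mT r) =
   \sum_(i < m.+1) sigma q`_i *: iter i.+1 mT r +
   \sum_(i < m.+1) delta q`_i *: iter i mT r.
  by rewrite -big_split /=; apply: eq_bigr => i _; rewrite mTZ.
congr (_ + _).
rewrite big_ord_recl /= scale0r add0r big_ord_recr /= nth_default // rmorph0 scale0r addr0.
by apply: eq_bigr => i _.
Qed.

Lemma spmul_iter i q r : sm (iter i mT q) r = iter i mT (sm q r).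
Proof. by elim: i => //= i <-; rewrite spmul_mT. Qed.

Lemma spmul_sum n (F : 'I_n -> {poly K}) r : sm (\sum_(i < n) F i) r = \sum_(i < n) sm (F i) r.
Proof. exact: (big_morph (fun p => sm p r) (fun p q => spmulDl p q r) (spmul0l r)). Qed.

Lemma spmulA p q r : sm (sm p q) r = sm p (sm q r).
Proof.
have -> : sm p q = \sum_(i < size p) p`_i *: iter i mT q by [].
rewrite spmul_sum [sm p (sm q r)]/spmul; apply: eq_bigr => i _.
by rewrite spmulZl spmul_iter.
Qed.

Lemma mulf_neq0K (x y : K) : x != 0 -> y != 0 -> x * y != 0.
Proof. move=> /Kdiv hx /Kdiv hy; apply: unit_neq0; by rewrite unitrMl. Qed.

Lemma size_mT p : p != 0 -> size (mT p) = (size p).+1.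
Proof.
move=> pnz; have [k sp] : exists k, size p = k.+1.
  by exists (size p).-1; rewrite prednK // size_poly_gt0.
rewrite sp; apply: size_eq_coef.
  apply/leq_sizeP => j hj; rewrite coef_mT.
  case: j hj => // j hj /=.
  by rewrite !nth_default ?rmorph0 ?d0 ?addr0 ?sp // ltnW.
rewrite coef_mT /= [p`_k.+1]nth_default ?d0 ?addr0 ?sp //.
apply: sig_neq0; have := pnz; rewrite -lead_coef_eq0 lead_coefE sp //.
Qed.

Lemma size_iter i q : q != 0 -> size (iter i mT q) = (size q + i)%N.
Proof.
move=> qnz; elim: i => [|i IH] /=; first by rewrite addn0.
rewrite size_mT ?IH ?addnS //.
by rewrite -size_poly_eq0 IH addn_eq0 size_poly_eq0 (negbTE qnz).
Qed.

Lemma size_spmul (p q : {poly K}) : p != 0 -> q != 0 -> size (sm p q) = (size p + size q).-1.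
Proof.
move=> pnz qnz.
have sq : (0 < size q)%N by rewrite size_poly_gt0.
have [m sp] : exists m, size p = m.+1.
  by exists (size p).-1; rewrite prednK // size_poly_gt0.
rewrite /spmul sp big_ord_recr /=.
have hlast : size (p`_m *: iter m mT q) = (size q + m)%N.
  have hs := size_iter m q qnz.
  have hq : iter m mT q != 0 by rewrite -size_poly_eq0 hs addn_eq0 negb_and -lt0n sq.
  have [N hN] : exists N, (size q + m)%N = N.+1.
    by exists (size q + m).-1; rewrite prednK // addn_gt0 sq.
  rewrite hN; apply: (size_eq_coef _ N).
    by rewrite -hN -hs size_scale_leq.
  rewrite (coefZ (p`_m)); apply: mulf_neq0K.
    by have := pnz; rewrite -lead_coef_eq0 lead_coefE sp.
  by have := hq; rewrite -lead_coef_eq0 lead_coefE hs hN.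
have [N hN] : exists N, (size q + m)%N = N.+1.
  by exists (size q + m).-1; rewrite prednK // addn_gt0 sq.
rewrite addrC size_polyDl hlast; first by rewrite addnC.
rewrite hN ltnS.
apply: (big_ind (fun x : {poly K} => (size x <= N)%N)).
- by rewrite size_poly0.
- move=> x y hx hy; apply: leq_trans (size_polyD _ _) _; by rewrite geq_max hx hy.
- move=> i _; apply: leq_trans (size_scale_leq _ _) _; rewrite size_iter //.
  by rewrite -ltnS -hN ltn_add2l.
Qed.

Lemma spmul_cancel (u x y : {poly K}) : u != 0 -> sm u x = sm u y -> x = y.
Proof.
move=> unz h; apply/eqP; rewrite -subr_eq0; apply/negPn/negP => nz.
have := size_spmul u (x - y) unz nz; rewrite spmulBr h subrr size_poly0.
have := size_poly_gt0 u; rewrite unz; have := size_poly_gt0 (x - y); rewrite nz.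
move=> h1 h2 h3; move: h3 h1 h2; case: (size u) => [|k] //=; case: (size (x - y)) => // n; rewrite addnS //.
Qed.

Lemma spmul1l r : sm 1 r = r.
Proof. by rewrite -polyC1 spmulC scale1r. Qed.

Lemma mT_Xn i : mT ('X^i : {poly K}) = 'X^(i.+1).
Proof.
apply/polyP => j; rewrite coef_mT !coefXn.
case: j => [|j] /=; first by rewrite add0r; case: (0%N == i); rewrite ?d1 ?d0.
case: (j.+1 == i); rewrite ?d1 ?d0 addr0 eqSS; by case: (j == i); rewrite ?rmorph1 ?rmorph0.
Qed.

Lemma spmulr1 v : sm v 1 = v.
Proof.
rewrite /spmul -[RHS]coefK poly_def; apply: eq_bigr => i _.
suff -> : iter i mT 1 = 'X^i by [].
by elim: (nat_of_ord i) => //= n ->; rewrite mT_Xn.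
Qed.

Lemma spmulBl p q r : sm (p - q) r = sm p r - sm q r.
Proof. by rewrite spmulDl spmulNl. Qed.

Lemma seval_uniq e z r : is_seval sigma delta ('X - e%:P) z r -> r = z - e.
Proof.
case=> Q hQ.
have h1 : 'X - e%:P = sm 1 ('X - z%:P) + (z - e)%:P.
  by rewrite spmul1l polyCB addrA subrK.
have h2 : sm (Q - 1) ('X - z%:P) = (z - e - r)%:P.
  have e1 : sm Q ('X - z%:P) = 'X - e%:P - r%:P by rewrite hQ addrK.
  have e2 : sm 1 ('X - z%:P) = 'X - e%:P - (z - e)%:P by rewrite {1}h1 addrK.
  by rewrite spmulBl polyCB e1 e2 opprB addrC addrA subrK.
have [Q1|Qnz] := eqVneq (Q - 1) 0.
  move: h2; rewrite Q1 spmul0l => /esym/eqP; rewrite polyC_eq0 subr_eq0 => /eqP.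
  move=> h; apply/eqP; by rewrite eq_sym -subr_eq0 h subrr.
have := size_spmul _ _ Qnz (monic_neq0 (monicXsubC z)).
rewrite h2 size_XsubC addn2 /= => hs.
have := leq_b1 (z - e - r != 0); rewrite -size_polyC hs ltnS leqn0 size_poly_eq0.
by rewrite (negbTE Qnz).
Qed.

Lemma seval_XsubC e z : seval sigma delta ('X - e%:P) z = z - e.
Proof.
apply: seval_uniq; rewrite /seval; apply: epsilon_spec.
exists (z - e), 1; by rewrite spmul1l polyCB addrA subrK.
Qed.

Lemma frac_struct d P Q : lfrac_eq sigma delta P Q ('X - d%:P) 1 ->
  P = sm Q ('X - d%:P).
Proof.
case=> u [v] [h1 h2 h3]; rewrite spmulr1 in h3.
have unz : u != 0 by apply: contraNneq h2 => ->; rewrite spmul0l.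
apply: (spmul_cancel _ _ _ unz); by rewrite h1 -h3 spmulA.
Qed.

Lemma frac_refl d : lfrac_eq sigma delta ('X - d%:P) 1 ('X - d%:P) 1.
Proof.
exists 1, 1; split => //; rewrite spmul1l; exact: monic_neq0 (monicXsubC d).
Qed.

Lemma frac_size d P Q : lfrac_eq sigma delta P Q ('X - d%:P) 1 -> P \is monic ->
  size P = (size Q).+1 /\ Q != 0.
Proof.
move=> /frac_struct hP Pm.
have Qnz : Q != 0.
  by apply: contraTneq Pm => hQ; rewrite hP hQ spmul0l monicE lead_coef0 eq_sym oner_eq0.
split=> //; rewrite hP size_spmul ?size_XsubC ?addn2 //; exact: monic_neq0 (monicXsubC d).
Qed.

Lemma minimal_XsubC b : minimal_lrep sigma delta ('X - b%:P) 1 ('X - b%:P) 1.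
Proof.
split; [exact: frac_refl | exact: monicXsubC|].
move=> P' Q' hf hm; have [-> Qnz] := frac_size _ _ _ hf hm.
by rewrite size_XsubC ltnS size_poly_gt0.
Qed.

Lemma minimal_is_XsubC d P Q : minimal_lrep sigma delta P Q ('X - d%:P) 1 -> P = 'X - d%:P.
Proof.
case=> hf hm hmin.
have := hmin _ _ (frac_refl d) (monicXsubC d); rewrite size_XsubC.
have [hs Qnz] := frac_size _ _ _ hf hm.
rewrite hs ltnS => /size1_polyC hQ.
move: hQ; set q := Q`_0 => hQ.
have hP := frac_struct _ _ _ hf; rewrite hQ spmulC in hP.
have q0 : q != 0 by apply: contraNneq Qnz => h; rewrite hQ h.
move/monicP: hm; rewrite lead_coefE hs hQ size_polyC q0 /=.
rewrite [in X in X -> _]hP (coefZ q) coefB coefX coefC /= subr0 mulr1 => h1.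
by rewrite hP h1 scale1r.
Qed.

Lemma sact1 z : sact sigma delta 1 z = z.
Proof. by rewrite /sact rmorph1 d1 invr1 mul1r mulr1 mul0r addr0. Qed.

Lemma sactM x y z : x != 0 -> y != 0 ->
  sact sigma delta x (sact sigma delta y z) = sact sigma delta (x * y) z.
Proof.
move=> /Kdiv hx /Kdiv hy; rewrite /sact rmorphM delta_mul invrM //.
rewrite !mulrDr !mulrDl !mulrA (mulrK hy) addrA //.
Qed.

Lemma sact_sub y v w : y != 0 ->
  sact sigma delta y v - sact sigma delta y w = sigma y * (v - w) * y^-1.
Proof.
move=> _; rewrite /sact mulrBr mulrBl opprD addrACA subrr addr0 //.
Qed.

Lemma Delta_act a z x : Delta sigma delta a z -> x != 0 -> Delta sigma delta a (sact sigma delta x z).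
Proof. case=> w wnz -> xnz; exists (x * w); [exact: mulf_neq0K | by rewrite sactM]. Qed.

Lemma skew_prod1 (f g : K -> K) w : skew_prod sigma delta f g w = 1 ->
  g w != 0 /\ f (sact sigma delta (g w) w) * g w = 1.
Proof.
rewrite /skew_prod; case: ifP => [gnz h | _ h]; first by split.
by move: (oner_eq0 K); rewrite -h eqxx.
Qed.

Lemma invf_neq0 (x : K) : x != 0 -> x^-1 != 0.
Proof. by move=> /Kdiv hx; apply: unit_neq0; rewrite unitrV. Qed.

Lemma main a b c d : Delta sigma delta a c -> Delta sigma delta b d ->
  defined_at sigma delta ('X - b%:P) 1 a -> defined_at sigma delta ('X - d%:P) 1 c.
Proof.
case=> x xnz ->; case=> e enz -> Hdef P Q Hmin.
rewrite (minimal_is_XsubC _ _ _ Hmin).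
have [g hg] := Hdef _ _ (minimal_XsubC b).
have snz : sigma e != 0 := sig_neq0 e enz.
have einz := invf_neq0 e enz.
have sinz := invf_neq0 _ snz.
have KG : forall z, z - sact sigma delta e b =
    sigma e * (sact sigma delta e^-1 z - b) * e^-1.
  move=> z; rewrite -sact_sub // sactM // mulrV ?Kdiv // sact1 //.
exists (fun z => e * g (sact sigma delta (sigma e)^-1 z) * (sigma e)^-1) => z hz.
have za : Delta sigma delta a z.
  case: hz => y ynz ->; apply: Delta_act => //; by exists x.
split.
- have wa : Delta sigma delta a (sact sigma delta (sigma e)^-1 z) by apply: Delta_act.
  have [gnz hw] := skew_prod1 _ _ _ (proj1 (hg _ wa)).
  rewrite /= seval_XsubC in hw.
  have hnz : e * g (sact sigma delta (sigma e)^-1 z) * (sigma e)^-1 != 0.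
    by rewrite !mulf_neq0K.
  rewrite /skew_prod hnz seval_XsubC KG sactM ?mulf_neq0K //.
  have -> : e^-1 * (e * g (sact sigma delta (sigma e)^-1 z) * (sigma e)^-1) =
     g (sact sigma delta (sigma e)^-1 z) * (sigma e)^-1.
    by rewrite -!mulrA mulKr ?Kdiv.
  rewrite -sactM //.
  by rewrite !mulrA divrK ?Kdiv // -(mulrA (sigma e)) hw mulr1 mulrV ?Kdiv.
- have va : Delta sigma delta a (sact sigma delta e^-1 z) by apply: Delta_act.
  have [Fnz hv] := skew_prod1 _ _ _ (proj2 (hg _ va)).
  rewrite /= seval_XsubC in Fnz hv.
  have Gnz : z - sact sigma delta e b != 0 by rewrite KG !mulf_neq0K.
  rewrite /skew_prod /= seval_XsubC Gnz KG sactM ?mulf_neq0K //.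
  have -> : (sigma e)^-1 * (sigma e * (sact sigma delta e^-1 z - b) * e^-1) =
     (sact sigma delta e^-1 z - b) * e^-1.
    by rewrite -mulrA mulKr ?Kdiv.
  rewrite -sactM //.
  by rewrite !mulrA divrK ?Kdiv // -(mulrA e) hv mulr1 mulrV ?Kdiv.
Qed.

End Work.

Theorem proposition3p3
  (K : unitRingType)
  (Kdiv : forall x : K, x != 0 -> x \is a GRing.unit)
  (sigma : {rmorphism K -> K})
  (delta : K -> K)
  (delta_add : forall x y : K, delta (x + y) = delta x + delta y)
  (delta_mul : forall x y : K, delta (x * y) = sigma x * delta y + delta x * y)
  (a b c d : K) :
  Delta sigma delta a c -> Delta sigma delta b d ->
  defined_at sigma delta ('X - b%:P) 1 a ->
  defined_at sigma delta ('X - d%:P) 1 c.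
Proof. exact: (@main K Kdiv sigma delta delta_add delta_mul a b c d). Qed.
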